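(* For any $0\le k\le n$ and $\lambda,\mu\vdash n$, $$m\big((\lambda,\mu),\alpha_{H_n^k}\big)=m\big((\lambda',\mu'),\alpha_{H_n^k}\big)\quad\text{and}\quad m\big((\lambda,\mu),\alpha_{H_n^k}\big)=m\big((\mu,\lambda),\alpha_{H_n^k}\big),$$ where $\lambda',\mu'$ are the conjugate partitions.
   Context: Permutations are composed as functions, and $\pi\in S_n$ is identified with the permutation matrix whose $(i,j)$ entry is $1$ iff $i=\pi(j)$. For $A\in GL_n(\mathbb{Z}_2)$ let $\eta(A)$ (resp. $\theta(A)$) be the partition obtained by sorting the row sums (resp. column sums) of $A$, computed as integers, in weakly decreasing order. For $0\le k\le n$, $H_n^k=\{A\in GL_n(\mathbb{Z}_2)\mid \eta(A)=(n,n-1,\dots,n-k+1,1^{n-k}),\ \theta(A)=((k+1)^{n-k},k,k-1,\dots,1)\}$. $\alpha_{H_n^k}$ is the complex permutation representation of $S_n\times S_n$ on the space with basis $H_n^k$ given by $(\pi,\sigma)\bullet A=\pi A\sigma^{-1}$. $m((\lambda,\mu),\varphi)$ denotes the multiplicity in $\varphi$ of the irreducible $S_n\times S_n$-representation $S^\lambda\otimes S^\mu$. *)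

(* Defs.v *)
From HB Require Import structures.
From mathcomp Require Import all_boot all_order all_algebra all_fingroup.
From mathcomp Require Import algC.
Set Implicit Arguments. Unset Strict Implicit. Unset Printing Implicit Defensive.
Import GRing.Theory Num.Theory.
Local Open Scope ring_scope.

Definition is_partn (n : nat) (la : seq nat) : bool :=
  [&& sorted geq la, all (fun x => 0 < x)%N la & sumn la == n].

Definition conj_part (la : seq nat) : seq nat :=
  [seq count (fun x => j < x)%N la | j <- iota 0 (head 0%N la)].

Definition rowsum n (A : 'M['F_2]_n) (i : 'I_n) : nat :=
  (\sum_(j < n) (A i j != 0%R : nat))%N.
Definition colsum n (A : 'M['F_2]_n) (j : 'I_n) : nat :=
  (\sum_(i < n) (A i j != 0%R : nat))%N.

Definition eta_p n (A : 'M['F_2]_n) : seq nat :=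
  sort geq [seq rowsum A i | i <- enum 'I_n].
Definition theta_p n (A : 'M['F_2]_n) : seq nat :=
  sort geq [seq colsum A j | j <- enum 'I_n].

Definition eta_target (n k : nat) : seq nat :=
  [seq (n - i)%N | i <- iota 0 k] ++ nseq (n - k) 1%N.
Definition theta_target (n k : nat) : seq nat :=
  nseq (n - k) k.+1 ++ [seq (k - i)%N | i <- iota 0 k].

Definition Hnk (n k : nat) : {set 'M['F_2]_n} :=
  [set A : 'M['F_2]_n | (A \in unitmx) && (eta_p A == eta_target n k)
                        && (theta_p A == theta_target n k)].

Definition pmat {R : nzRingType} n (p : {perm 'I_n}) : 'M[R]_n :=
  \matrix_(i, j) (i == p j)%:R.

Definition act_mx n (p s : {perm 'I_n}) (A : 'M['F_2]_n) : 'M['F_2]_n :=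
  pmat p *m A *m pmat (s^-1)%g.

(* character of the permutation representation alpha_X of S_n x S_n
   on the space with basis X : trace of the permutation matrix of (p,s),
   i.e. the number of basis elements fixed by (p,s). *)
Definition alpha_char n (X : {set 'M['F_2]_n}) (p s : {perm 'I_n}) : algC :=
  (#|[set A in X | act_mx p s A == A]|)%:R.

Definition cells (la : seq nat) : seq (nat * nat) :=
  flatten [seq [seq (i, j) | j <- iota 0 (nth 0%N la i)] | i <- iota 0 (size la)].

(* A tableau of shape la |- n is encoded by t : {perm 'I_n}: the entry t k is
   written in the k-th cell (row-reading order). *)
Definition row_of (la : seq nat) n (t : {perm 'I_n}) (e : 'I_n) : nat :=
  (nth (0, 0) (cells la) (t^-1%g e)).1.
Definition col_of (la : seq nat) n (t : {perm 'I_n}) (e : 'I_n) : nat :=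
  (nth (0, 0) (cells la) (t^-1%g e)).2.

(* tabloids: an entry -> its row *)
Definition tabloid_t n := {ffun 'I_n -> 'I_n.+1}.
Definition tabloid (la : seq nat) n (t : {perm 'I_n}) : tabloid_t n :=
  [ffun e => inord (row_of la t e)].

(* the tableau c.t obtained by applying c to the entries of t *)
Definition perm_tab n (c t : {perm 'I_n}) : {perm 'I_n} := (t * c)%g.

Definition colstab (la : seq nat) n (t : {perm 'I_n}) : {set {perm 'I_n}} :=
  [set c : {perm 'I_n} | [forall e, col_of la t (c e) == col_of la t e]].

Definition NM n := #|{: tabloid_t n}|.
Definition tdelta n (T : tabloid_t n) : 'rV[algC]_(NM n) :=
  \row_(j < NM n) (j == enum_rank T)%:R.

Definition polytabloid (la : seq nat) n (t : {perm 'I_n}) : 'rV[algC]_(NM n) :=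
  \sum_(c in colstab la t) (-1) ^+ (odd_perm c) *: tdelta (tabloid la (perm_tab c t)).

(* the Specht module S^la: row space spanned by all polytabloids *)
Definition specht_span (la : seq nat) n : 'M[algC]_(#|{: {perm 'I_n}}|, NM n) :=
  \matrix_(i < #|{: {perm 'I_n}}|) polytabloid la (enum_val i).

Definition tab_act n (p : {perm 'I_n}) (T : tabloid_t n) : tabloid_t n :=
  [ffun e => T ((p^-1)%g e)].
Definition Mperm n (p : {perm 'I_n}) : 'M[algC]_(NM n) :=
  \matrix_(i, j) (enum_val j == tab_act p (enum_val i))%:R.

(* character of S^la: trace of the action of p restricted to S^la,
   computed in the basis row_base of the Specht subspace *)
Definition specht_char (la : seq nat) n (p : {perm 'I_n}) : algC :=
  let B := row_base (specht_span la n) in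
  \tr (B *m Mperm p *m pinvmx B).

(* multiplicity of the irreducible S^la (x) S^mu in the permutation
   representation alpha_X of S_n x S_n: the character inner product *)
Definition mult n (la mu : seq nat) (X : {set 'M['F_2]_n}) : algC :=
  ((n`! ^ 2)%:R)^-1 *
  \sum_(p : {perm 'I_n}) \sum_(s : {perm 'I_n})
     alpha_char X p s * ((specht_char la p)^* * (specht_char mu s)^*).

(* Main.v *)
Require Import Defs.
From mathcomp Require Import all_boot all_order all_algebra all_fingroup.
From mathcomp Require Import algC.
Set Implicit Arguments. Unset Strict Implicit. Unset Printing Implicit Defensive.
Import GRing.Theory Num.Theory.
Local Open Scope ring_scope.

Section LA.
Variable F : fieldType.

Lemma trB_eq N r1 r2 (B1 : 'M[F]_(r1, N)) (B2 : 'M[F]_(r2, N)) (M : 'M_N) :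
  row_free B1 -> row_free B2 -> (B1 :=: B2)%MS -> (B1 *m M <= B1)%MS ->
  \tr (B1 *m M *m pinvmx B1) = \tr (B2 *m M *m pinvmx B2).
Proof.
move=> f1 f2 e12 inv1.
have inv2 : (B2 *m M <= B2)%MS by rewrite -(eqmxMr M e12) -e12.
set Q := B2 *m pinvmx B1; set Q' := B1 *m pinvmx B2.
have hQ : Q *m B1 = B2 by rewrite mulmxKpV // e12.
have hQ' : Q' *m B2 = B1 by rewrite mulmxKpV // -e12.
have QQ' : Q *m Q' = 1%:M.
  apply: (row_free_inj f2); rewrite /= -mulmxA hQ' hQ mul1mx //.
have Q'Q : Q' *m Q = 1%:M.
  apply: (row_free_inj f1); rewrite /= -mulmxA hQ hQ' mul1mx //.
set X1 := B1 *m M *m pinvmx B1; set X2 := B2 *m M *m pinvmx B2.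
have hX1 : X1 *m B1 = B1 *m M by rewrite mulmxKpV.
have hX2 : X2 *m B2 = B2 *m M by rewrite mulmxKpV.
clearbody Q Q' X1 X2.
have : X2 = Q *m X1 *m Q'.
  apply: (row_free_inj f2); rewrite /= hX2 -!mulmxA hQ' hX1 mulmxA hQ //.
move->; by rewrite mxtrace_mulC mulmxA Q'Q mul1mx.
Qed.

Lemma trB_twist N r (B1 : 'M[F]_(r, N)) (M K : 'M_N) (c : F) :
  row_free B1 -> row_free (B1 *m K) -> (B1 *m M <= B1)%MS ->
  K *m M = c *: (M *m K) ->
  \tr (B1 *m K *m M *m pinvmx (B1 *m K)) = c * \tr (B1 *m M *m pinvmx B1).
Proof.
move=> f1 f2 inv1 hK.
set X1 := B1 *m M *m pinvmx B1.
have hX1 : X1 *m B1 = B1 *m M by rewrite mulmxKpV.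
clearbody X1.
set X2 := _ *m pinvmx _.
have e : B1 *m K *m M = (c *: X1) *m (B1 *m K).
  by rewrite -mulmxA hK -scalemxAr -scalemxAl mulmxA hX1 mulmxA.
have inv2 : (B1 *m K *m M <= B1 *m K)%MS by rewrite e submxMl.
have hX2 : X2 *m (B1 *m K) = B1 *m K *m M by rewrite mulmxKpV.
have : X2 = c *: X1 by apply: (row_free_inj f2); rewrite /= hX2 e.
by move->; rewrite mxtraceZ.
Qed.
End LA.
Lemma real_ker0 N m (K : 'M[algC]_N) (W : 'M[algC]_(m, N)) :
  (forall i j, (K i j)^* = K i j) -> (W <= K^T)%MS -> W *m K = 0 -> W = 0.
Proof.
move=> rK sW WK0.
have [Y hY] : exists Y, W = Y *m K^T by exists (W *m pinvmx K^T); rewrite mulmxKpV.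
have cW : map_mx Num.conj W = map_mx Num.conj Y *m K^T.
  apply/matrixP=> i j; rewrite hY !mxE rmorph_sum; apply: eq_bigr => l _.
  by rewrite !mxE rmorphM /= rK.
have h0 : W *m (map_mx Num.conj W)^T = 0.
  by rewrite cW trmx_mul trmxK mulmxA WK0 mul0mx.
apply/matrixP => i j; rewrite mxE.
have := congr1 (fun X : 'M[algC]_m => X i i) h0; rewrite !mxE => /eqP.
rewrite psumr_eq0 => [/allP /(_ j (mem_index_enum _))|k _]; last first.
  by rewrite !mxE mul_conjC_ge0.
by rewrite !mxE mul_conjC_eq0 => /eqP.
Qed.

Lemma row_free_real N r (K : 'M[algC]_N) (B : 'M[algC]_(r, N)) :
  (forall i j, (K i j)^* = K i j) -> (B <= K^T)%MS -> row_free B -> row_free (B *m K).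
Proof.
move=> rK sB fB; rewrite -kermx_eq0; apply/eqP.
set Z := kermx _.
have : Z *m B = 0.
  apply: (real_ker0 rK); first by rewrite (submx_trans (submxMl _ _)).
  by rewrite -mulmxA mulmx_ker.
by move=> h; apply: (row_free_inj fB); rewrite /= h mul0mx.
Qed.
Section Specht.
Variable n : nat.
Local Notation perm := {perm 'I_n}.
Local Notation tab := (tabloid_t n).

Definition sg (s : perm) : algC := (-1) ^+ odd_perm s.

Lemma sgM s t : sg (s * t)%g = sg s * sg t.
Proof. by rewrite /sg odd_permM signr_addb. Qed.

Lemma sgV s : sg (s^-1)%g = sg s.
Proof. by rewrite /sg odd_permV. Qed.

Lemma sg2 s : sg s * sg s = 1.
Proof. by rewrite /sg -expr2 sqrr_sign. Qed.

Lemma tab_actM (p q : perm) (T : tab) :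
  tab_act (p * q)%g T = tab_act q (tab_act p T).
Proof. by apply/ffunP => e; rewrite !ffunE invMg permM. Qed.

Lemma tab_act1 (T : tab) : tab_act 1%g T = T.
Proof. by apply/ffunP => e; rewrite !ffunE invg1 perm1. Qed.

Lemma tab_actK (p : perm) : cancel (tab_act p) (tab_act p^-1).
Proof. by move=> T; rewrite -tab_actM mulgV tab_act1. Qed.

Lemma tab_actKV (p : perm) : cancel (tab_act p^-1) (tab_act p).
Proof. by move=> T; rewrite -tab_actM mulVg tab_act1. Qed.

Definition kf (R C : tab) (a b : tab) : algC :=
  \sum_(s : perm) sg s * ((a == tab_act s R) && (b == tab_act s C))%:R.

Definition Kmx (R C : tab) : 'M[algC]_(NM n) :=
  \matrix_(i, j) kf R C (enum_val i) (enum_val j).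

Lemma Kmx_tr R C : (Kmx R C)^T = Kmx C R.
Proof.
by apply/matrixP => i j; rewrite !mxE /kf; apply: eq_bigr => s _; rewrite andbC.
Qed.

Lemma kf_twist R C p a b :
  kf R C (tab_act p a) b = sg p * kf R C a (tab_act p^-1 b).
Proof.
rewrite /kf mulr_sumr (reindex_inj (mulIg p)) /=; apply: eq_bigr => s _.
rewrite sgM [sg s * sg p]mulrC -mulrA; congr (_ * (_ * _)); congr (_%:R).
rewrite !tab_actM; congr (_ && _).
  by apply/eqP/eqP => [h|->//]; rewrite -(tab_actK p a) h tab_actK.
by apply/eqP/eqP => [->|<-]; rewrite ?tab_actK ?tab_actKV.
Qed.

Lemma eq_rank (x : tab) (j : 'I_(NM n)) : (j == enum_rank x) = (enum_val j == x).
Proof. by apply/eqP/eqP => [->|<-]; rewrite ?enum_rankK ?enum_valK. Qed.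

Lemma tdeltaE (x : tab) (j : 'I_(NM n)) : tdelta x 0 j = (enum_val j == x)%:R.
Proof. by rewrite mxE eq_rank. Qed.

Lemma MpermE (p : perm) i j : Mperm p i j = (enum_val j == tab_act p (enum_val i))%:R.
Proof. by rewrite mxE. Qed.

Lemma K_twist R C (p : perm) : Kmx R C *m Mperm p = sg p *: (Mperm p *m Kmx R C).
Proof.
apply/matrixP => i j; rewrite !mxE.
rewrite (bigD1 (enum_rank (tab_act p^-1 (enum_val j)))) //=.
rewrite [X in _ = _ * X](bigD1 (enum_rank (tab_act p (enum_val i)))) //=.
rewrite !big1 ?addr0.
- rewrite !mxE !enum_rankK eqxx tab_actKV eqxx !mulr1 kf_twist mul1r mulrA sg2 mul1r //.
- move=> x /negPf hx; rewrite !mxE.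
  case: eqP => [h|]; last by rewrite mul0r.
  by move: hx; rewrite -h enum_valK eqxx.
- move=> x /negPf hx; rewrite !mxE.
  case: eqP => [h|]; last by rewrite mulr0.
  by move: hx; rewrite h tab_actK enum_valK eqxx.
Qed.

Lemma Kmx_real R C i j : (Kmx R C i j)^* = Kmx R C i j.
Proof.
rewrite mxE /kf rmorph_sum; apply: eq_bigr => s _.
by rewrite rmorphM /= conjC_nat /sg rmorph_sign.
Qed.


Definition colfun (la : seq nat) (w : perm) : tab :=
  [ffun e => inord (col_of la w e)].

Definition pt (R C : tab) : 'rV[algC]_(NM n) :=
  \sum_(c : perm | tab_act c C == C) sg c *: tdelta (tab_act c R).

Lemma tabloid_M la (w c : perm) : tabloid la (w * c)%g = tab_act c (tabloid la w).
Proof. by apply/ffunP => e; rewrite !ffunE /row_of invMg permM. Qed.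

Lemma colfun_M la (w c : perm) : colfun la (w * c)%g = tab_act c (colfun la w).
Proof. by apply/ffunP => e; rewrite !ffunE /col_of invMg permM. Qed.

Lemma inord_inj_le (a b : nat) : (a <= n)%N -> (b <= n)%N ->
  (inord a : 'I_n.+1) = inord b -> a = b.
Proof.
move=> ha hb /(congr1 val); rewrite /= !inordK //.
Qed.

Lemma polytabloid_pt la (w : perm) : (forall e, col_of la w e <= n)%N ->
  polytabloid la w = pt (tabloid la w) (colfun la w).
Proof.
move=> hle; rewrite /polytabloid /pt; apply: eq_big => c.
  rewrite inE; apply/forallP/eqP => [h|h].
    apply/ffunP => e; rewrite !ffunE; congr inord.
    by have := h (c^-1 e)%g; rewrite permKV => /eqP.
  move=> e; apply/eqP; apply: inord_inj_le; rewrite ?hle //.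
  by have := congr1 (fun f : tab => f (c e)) h; rewrite !ffunE permK.
by move=> _; rewrite /perm_tab tabloid_M.
Qed.

Lemma rowKT R C (j : 'I_(NM n)) :
  row j (Kmx R C)^T =
  \sum_(s : perm) (sg s * (enum_val j == tab_act s C)%:R) *: tdelta (tab_act s R).
Proof.
apply/rowP => a; rewrite !mxE summxE /kf; apply: eq_bigr => s _.
by rewrite !mxE eq_rank -mulrA -natrM mulnb andbC.
Qed.

Lemma rowKT_orb R C (j : 'I_(NM n)) (s : perm) : enum_val j = tab_act s C ->
  row j (Kmx R C)^T = sg s *: pt (tab_act s R) (tab_act s C).
Proof.
move=> hj; rewrite rowKT (reindex_inj (mulgI s)) /= /pt scaler_sumr.
rewrite [RHS]big_mkcond /=; apply: eq_bigr => c _.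
rewrite hj !tab_actM sgM.
rewrite [tab_act s C == _]eq_sym.
case: eqP => _; first by rewrite mulr1 scalerA.
by rewrite mulr0 scale0r.
Qed.

Lemma rowKT_0 R C (j : 'I_(NM n)) : (forall s : perm, enum_val j != tab_act s C) ->
  row j (Kmx R C)^T = 0.
Proof.
move=> h; rewrite rowKT big1 // => s _.
by rewrite (negPf (h s)) mulr0 scale0r.
Qed.

Lemma span_eq la (t : perm) : (forall (w : perm) e, col_of la w e <= n)%N ->
  (specht_span la n :=: (Kmx (tabloid la t) (colfun la t))^T)%MS.
Proof.
move=> hle; apply/eqmxP/andP; split; apply/row_subP.
  move=> i; rewrite rowK polytabloid_pt //.
  set w := enum_val i; set s := (t^-1 * w)%g.
  have ew : w = (t * s)%g by rewrite /s mulgA mulgV mul1g.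
  rewrite ew tabloid_M colfun_M.
  have := rowKT_orb (tabloid la t) (enum_rankK (tab_act s (colfun la t))).
  move=> h; have -> : pt (tab_act s (tabloid la t)) (tab_act s (colfun la t)) =
     sg s *: row (enum_rank (tab_act s (colfun la t))) (Kmx (tabloid la t) (colfun la t))^T.
    by rewrite h scalerA sg2 scale1r.
  by rewrite scalemx_sub // row_sub.
move=> j; case: (pickP (fun s : perm => enum_val j == tab_act s (colfun la t))).
  move=> s /eqP hs; rewrite (rowKT_orb _ hs) -colfun_M -tabloid_M -polytabloid_pt //.
  rewrite scalemx_sub //.
  have -> : polytabloid la (t * s)%g = row (enum_rank (t * s)%g) (specht_span la n).
    by rewrite rowK enum_rankK.
  exact: row_sub.
by move=> none; rewrite rowKT_0 ?sub0mx // => s; rewrite none.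
Qed.

End Specht.
Import GRing.Theory Num.Theory.
Local Close Scope ring_scope.
Lemma mem_cells s x : (x \in cells s) = (x.1 < size s) && (x.2 < nth 0 s x.1).
Proof.
case: x => i j /=; apply/flatten_mapP/andP => [[i' hi' /mapP [j' hj' [-> ->]]]|[hi hj]].
  by move: hi' hj'; rewrite !mem_iota !add0n.
by exists i; rewrite ?mem_iota //; apply/mapP; exists j; rewrite ?mem_iota.
Qed.

Lemma uniq_blocks (f : nat -> nat) (l : seq nat) : uniq l ->
  uniq (flatten [seq [seq (i, j) | j <- iota 0 (f i)] | i <- l]).
Proof.
elim: l => [|x l IH] //= /andP [xl ul]; rewrite cat_uniq IH // andbT.
apply/andP; split.
  by rewrite map_inj_uniq ?iota_uniq // => a b [].
apply/hasPn => y /flatten_mapP [i il /mapP [j _ ->]].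
by apply/mapP => [[j' _ [ei _]]]; move: xl; rewrite -ei il.
Qed.

Lemma uniq_cells s : uniq (cells s).
Proof. exact/uniq_blocks/iota_uniq. Qed.

Lemma size_cells s : size (cells s) = sumn s.
Proof.
rewrite /cells size_flatten /shape -map_comp.
rewrite (eq_map (g := nth 0 s)); last by move=> i /=; rewrite size_map size_iota.
by rewrite -/(mkseq _ _) mkseq_nth.
Qed.

Lemma sorted_count_nth (s : seq nat) i j : sorted geq s ->
  (i < count (fun x => j < x) s) = (j < nth 0 s i).
Proof.
elim: s i => [|x s IH] i /=; first by rewrite nth_nil.
move=> ps; have ss : sorted geq s by apply: path_sorted ps.
have allx : all (geq x) s by apply: order_path_min ps => a b c h1 h2; exact: leq_trans h2 h1.
case: (ltnP j x) => hjx.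
  by case: i => [|i] //=; rewrite add1n ltnS IH.
have c0 : count (fun x0 => j < x0) s = 0.
  apply/eqP; rewrite -leqn0 leqNgt -has_count; apply/hasPn => y ys.
  by rewrite -leqNgt (leq_trans _ hjx) //; exact: (allP allx).
rewrite add0n c0 /=; apply/esym; apply/negbTE; rewrite -leqNgt.
case: i => [|i] //=; apply: leq_trans hjx.
case: (ltnP i (size s)) => hi; first by exact: (allP allx) _ (mem_nth 0 hi).
by rewrite nth_default.
Qed.

Lemma nth_le_head (s : seq nat) i : sorted geq s -> nth 0 s i <= head 0 s.
Proof.
case: s => [|x s] //=; first by rewrite nth_nil.
move=> ps; have allx : all (geq x) s.
  by apply: order_path_min ps => a b c h1 h2; exact: leq_trans h2 h1.
case: i => [|i] //=; case: (ltnP i (size s)) => hi.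
  exact: (allP allx) _ (mem_nth 0 hi).
by rewrite nth_default.
Qed.

Lemma mem_cells_conj (la : seq nat) i j : sorted geq la ->
  ((j, i) \in cells (conj_part la)) = ((i, j) \in cells la).
Proof.
move=> sl; rewrite !mem_cells /= /conj_part size_map size_iota.
case: (ltnP j (head 0 la)) => hj /=.
  rewrite (nth_map 0) ?size_iota // nth_iota // add0n sorted_count_nth //.
  case: (ltnP j (nth 0 la i)) => hji; rewrite ?andbF ?andbT //.
  by case: (ltnP i (size la)) => // hi; move: hji; rewrite nth_default.
case: (ltnP j (nth 0 la i)) => hji; rewrite ?andbF //.
by move: (leq_trans hji (nth_le_head i sl)); rewrite ltnNge hj.
Qed.

Definition swp (x : nat * nat) := (x.2, x.1).
Lemma swpK : involutive swp. Proof. by case. Qed.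

Lemma size_cells_conj (la : seq nat) : sorted geq la ->
  size (cells (conj_part la)) = sumn la.
Proof.
move=> sl; rewrite -size_cells -(size_map swp).
apply: perm_size; apply: uniq_perm; rewrite ?uniq_cells ?(map_inj_uniq (inv_inj swpK)) ?uniq_cells //.
case=> j i; rewrite -[(j, i)]swpK (mem_map (inv_inj swpK)) /=.
by rewrite mem_cells_conj.
Qed.

Lemma part_le (n : nat) la : is_partn n la -> forall x, x \in la -> x <= n.
Proof.
case/and3P => _ _ /eqP <- x; elim: la => [|y l IH] //=.
rewrite inE => /orP [/eqP ->|/IH h]; first exact: leq_addr.
by rewrite (leq_trans h) // leq_addl.
Qed.

Lemma part_size (n : nat) la : is_partn n la -> size la <= n.
Proof.
case/and3P => _ pos /eqP <-; elim: la pos => [|y l IH] //= /andP [hy hl].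
by rewrite -add1n leq_add // IH.
Qed.

Lemma col_bound s m : (forall x, x \in s -> x <= m) ->
  forall k, (nth (0, 0) (cells s) k).2 <= m.
Proof.
move=> hs k; case: (ltnP k (size (cells s))) => hk; last by rewrite nth_default.
have := mem_nth (0, 0) hk; rewrite mem_cells => /andP [h1 h2].
apply: ltnW; apply: leq_trans h2 _; apply: hs; exact: mem_nth.
Qed.

Lemma conj_le (n : nat) la : is_partn n la -> forall x, x \in conj_part la -> x <= n.
Proof.
move=> hp x /mapP [j _ ->]; apply: leq_trans (count_size _ _) (part_size hp).
Qed.

Section Transp.
Variables (n : nat) (la : seq nat).
Hypothesis hp : is_partn n la.

Let c := cells la.
Let c' := cells (conj_part la).

Lemma size_c : size c = n.
Proof. by case/and3P: hp => _ _ /eqP <-; rewrite size_cells. Qed.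

Lemma size_c' : size c' = n.
Proof. by case/and3P: hp => sl _ /eqP <-; rewrite size_cells_conj. Qed.

Lemma swp_mem (e : 'I_n) : swp (nth (0, 0) c e) \in c'.
Proof.
have : nth (0, 0) c e \in c by apply: mem_nth; rewrite size_c.
case: (nth _ _ _) => i j; case/and3P: hp => sl _ _.
by rewrite /c' /= mem_cells_conj.
Qed.

Definition tf (e : 'I_n) : 'I_n := insubd e (index (swp (nth (0, 0) c e)) c').

Lemma tfE e : nth (0, 0) c' (tf e) = swp (nth (0, 0) c e).
Proof.
rewrite /tf insubdK; first by rewrite nth_index // swp_mem.
have := swp_mem e; rewrite -index_mem size_c'; exact.
Qed.

Lemma tf_inj : injective tf.
Proof.
move=> e1 e2 h; have := tfE e1; rewrite h tfE => /(inv_inj swpK) /esym.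
move/eqP; rewrite nth_uniq ?size_c ?uniq_cells // => /eqP.
exact: val_inj.
Qed.

Definition tp : {perm 'I_n} := ((perm tf_inj)^-1)%g.

Lemma row_of_tp e : row_of (conj_part la) tp e = col_of la 1%g e.
Proof. by rewrite /row_of /col_of invgK invg1 perm1 permE tfE. Qed.

Lemma col_of_tp e : col_of (conj_part la) tp e = row_of la 1%g e.
Proof. by rewrite /row_of /col_of invgK invg1 perm1 permE tfE. Qed.

End Transp.

Local Open Scope ring_scope.

Lemma specht_conj n la (p : {perm 'I_n}) : is_partn n la ->
  specht_char (conj_part la) p = sg p * specht_char la p.
Proof.
move=> hp.
pose R1 := tabloid la (1%g : {perm 'I_n}); pose C1 := colfun la (1%g : {perm 'I_n}); pose K := Kmx R1 C1.
have hle : forall (w : {perm 'I_n}) e, (col_of la w e <= n)%N.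
  by move=> w e; apply: col_bound; apply: part_le hp.
have hle' : forall (w : {perm 'I_n}) e, (col_of (conj_part la) w e <= n)%N.
  by move=> w e; apply: col_bound; apply: conj_le hp.
have e1 : (specht_span la n :=: K^T)%MS by apply: span_eq.
have e2 : (specht_span (conj_part la) n :=: K)%MS.
  have -> : K = (Kmx (tabloid (conj_part la) (tp hp)) (colfun (conj_part la) (tp hp)))^T.
    rewrite Kmx_tr; congr Kmx; apply/ffunP => e; rewrite !ffunE.
      by rewrite col_of_tp.
    by rewrite row_of_tp.
  exact: span_eq.
set B1 := row_base (specht_span la n).
have sB : (B1 <= K^T)%MS by rewrite eq_row_base e1.
have fB : row_free (B1 *m K) by apply: row_free_real => //; [exact: Kmx_real | exact: row_base_free].
have eBK : (B1 *m K :=: K)%MS.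
  apply/eqmxP/andP; split; first exact: submxMl.
  rewrite -(mxrank_leqif_sup (submxMl B1 K)).2 (eqP fB).
  by rewrite e1 mxrank_tr.
have tw : forall R C, Kmx R C *m Mperm p = sg p *: (Mperm p *m Kmx R C).
  by move=> R C; apply: K_twist.
rewrite /specht_char.
rewrite -(@trB_eq _ _ _ _ (B1 *m K)); first last.
- by rewrite (eqmxMr (Mperm p) eBK) eBK tw scalemx_sub // submxMl.
- exact: (eqmx_trans eBK (eqmx_trans (eqmx_sym e2) (eqmx_sym (eq_row_base _)))).
- exact: row_base_free.
- exact: fB.
rewrite (@trB_twist _ _ _ _ _ _ (sg p)) //; first exact: row_base_free.
  by rewrite (eqmxMr (Mperm p) (eq_row_base _)) eq_row_base (eqmxMr (Mperm p) e1) e1 /K Kmx_tr tw scalemx_sub // submxMl.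
exact: tw.
Qed.
Local Close Scope ring_scope.
Lemma F2_1 (x : 'F_2) : x != 0%R -> x = 1%R.
Proof. case: x => [[|[|m]]] //= h _; by apply: val_inj. Qed.

Lemma sum_bool_card (T : finType) (P : pred T) : (\sum_(j : T) (P j : nat))%N = #|P|.
Proof. rewrite -sum1_card [RHS]big_mkcond /=; apply: eq_bigr => j _; rewrite unfold_in; by case: (P j). Qed.

Section Act.
Variable n : nat.
Local Notation perm := {perm 'I_n}.
Local Open Scope ring_scope.

Lemma pmatE (p : perm) i j : (pmat p : 'M['F_2]_n) i j = (i == p j)%:R.
Proof. by rewrite mxE. Qed.

Lemma act_mxE (p s : perm) A i j : act_mx p s A i j = A (p^-1 i)%g (s^-1 j)%g.
Proof.
rewrite /act_mx !mxE (bigD1 (s^-1 j)%g) //= big1 ?addr0.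
  rewrite [pmat _ _ _]mxE eqxx mulr1 !mxE (bigD1 (p^-1 i)%g) //= big1 ?addr0.
    by rewrite [pmat _ _ _]mxE permKV eqxx mul1r.
  move=> x hx; rewrite [pmat _ _ _]mxE; case: eqP => [e|]; last by rewrite mul0r.
  by move: hx; rewrite e permK eqxx.
move=> x hx; rewrite [pmat _ _ _]mxE; case: eqP => [e|]; last by rewrite mulr0.
by move: hx; rewrite e eqxx.
Qed.


Lemma act_mxM (p s q r : perm) A :
  act_mx p s (act_mx q r A) = act_mx (q * p)%g (r * s)%g A.
Proof. by apply/matrixP => i j; rewrite !act_mxE !invMg !permM. Qed.

Lemma act_mx1 (A : 'M['F_2]_n) : act_mx 1%g 1%g A = A.
Proof. by apply/matrixP => i j; rewrite !act_mxE invg1 !perm1. Qed.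

Lemma act_fixP (p s : perm) A :
  act_mx p s A = A <-> forall i j, A (p i) (s j) = A i j.
Proof.
split => [h i j|h]; first by rewrite -{1}h act_mxE !permK.
by apply/matrixP => i j; rewrite act_mxE -h !permKV.
Qed.

Lemma rowsum_act (a b : perm) A i : rowsum (act_mx a b A) i = rowsum A (a^-1 i)%g.
Proof.
rewrite /rowsum (reindex_inj (@perm_inj _ b)) /=; apply: eq_bigr => j _.
by rewrite act_mxE permK.
Qed.

Lemma colsum_act (a b : perm) A j : colsum (act_mx a b A) j = colsum A (b^-1 j)%g.
Proof.
rewrite /colsum (reindex_inj (@perm_inj _ a)) /=; apply: eq_bigr => i _.
by rewrite act_mxE permK.
Qed.

Lemma perm_map_enum (f : 'I_n -> nat) (a : perm) :
  perm_eq [seq f (a i) | i <- enum 'I_n] [seq f i | i <- enum 'I_n].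
Proof.
rewrite (map_comp f a); apply: perm_map; apply: uniq_perm.
- by rewrite map_inj_uniq ?enum_uniq //; exact: perm_inj.
- exact: enum_uniq.
move=> x; rewrite mem_enum; apply/mapP; exists (a^-1 x)%g; rewrite ?mem_enum ?permKV //.
Qed.

Lemma sort_geq_eq (s1 s2 : seq nat) : perm_eq s1 s2 -> sort geq s1 = sort geq s2.
Proof.
move=> h; apply/perm_sortP => //.
- by move=> x y; exact: leq_total.
- by move=> x y z h1 h2; exact: leq_trans h2 h1.
- by move=> x y /andP [h1 h2]; apply/eqP; rewrite eqn_leq; apply/andP; split.
Qed.

Lemma eta_act (a b : perm) A : eta_p (act_mx a b A) = eta_p A.
Proof.
rewrite /eta_p; apply: sort_geq_eq.
rewrite (eq_map (rowsum_act a b A)); exact: perm_map_enum.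
Qed.

Lemma theta_act (a b : perm) A : theta_p (act_mx a b A) = theta_p A.
Proof.
rewrite /theta_p; apply: sort_geq_eq.
rewrite (eq_map (colsum_act a b A)); exact: perm_map_enum.
Qed.

Lemma pmat_perm_mx (p : perm) : (pmat p : 'M['F_2]_n) = perm_mx (p^-1)%g.
Proof.
apply/matrixP => i j; rewrite !mxE; case: (i =P p j) => [->|ne]; first by rewrite permK eqxx.
by case: eqP => // e; case: ne; rewrite -e permKV.
Qed.

Lemma Hnk_act k (a b : perm) A : A \in Hnk n k -> act_mx a b A \in Hnk n k.
Proof.
rewrite !inE eta_act theta_act => /andP [/andP [u ->] ->]; rewrite !andbT.
by rewrite /act_mx !unitmx_mul !pmat_perm_mx !unitmx_perm u.
Qed.

End Act.
Lemma card_count (T : finType) (P : pred T) : #|P| = count P (enum T).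
Proof. by rewrite cardE /enum_mem size_filter count_filter; apply: eq_count => x; rewrite /= !inE andbT. Qed.

Lemma uniq_fixpt n (f : 'I_n -> nat) (q : {perm 'I_n}) i :
  (forall x, f (q x) = f x) ->
  count (pred1 (f i)) [seq f x | x <- enum 'I_n] <= 1 -> q i = i.
Proof.
move=> hf; rewrite count_map => hc; apply/eqP; apply/negPn/negP => ne.
have : size [:: q i; i] <= size (filter (fun x => f x == f i) (enum 'I_n)).
  apply: uniq_leq_size; first by rewrite /= inE ne.
  by move=> x; rewrite !inE mem_filter mem_enum andbT => /orP [] /eqP ->; rewrite ?hf eqxx.
by rewrite size_filter => h; move: (leq_trans h hc).
Qed.

Lemma bij_sets (T : finType) (X Y : {set T}) : #|X| = #|Y| ->
  exists h : T -> T, (forall x, x \in X -> h x \in Y) /\ {in X &, injective h}.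
Proof.
move=> hc; exists (fun x => nth x (enum Y) (index x (enum X))).
have hi : forall x, x \in X -> index x (enum X) < size (enum Y).
  by move=> x hx; rewrite -cardE -hc cardE index_mem mem_enum.
split; first by move=> x hx; rewrite -mem_enum mem_nth // hi.
move=> x y hx hy /= e.
have : nth x (enum Y) (index x (enum X)) == nth x (enum Y) (index y (enum X)).
  by rewrite e (set_nth_default y x) ?hi.
rewrite nth_uniq ?hi ?enum_uniq // => /eqP ei.
have hx' : x \in enum X by rewrite mem_enum.
have hy' : y \in enum X by rewrite mem_enum.
by rewrite -(nth_index x hx') ei nth_index.
Qed.

Section Struct.
Variables (n k : nat) (A : 'M['F_2]_n) (p s : {perm 'I_n}).
Hypothesis hk : k <= n.
Hypothesis hA : A \in Hnk n k.
Hypothesis hfix : forall i j, A (p i) (s j) = A i j.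

Lemma hA_unit : A \in unitmx.
Proof. by move: hA; rewrite inE => /andP [/andP [] ]. Qed.
Lemma hA_eta : eta_p A = eta_target n k.
Proof. by move: hA; rewrite inE => /andP [/andP [_ /eqP]]. Qed.
Lemma hA_theta : theta_p A = theta_target n k.
Proof. by move: hA; rewrite inE => /andP [_ /eqP]. Qed.

Lemma rs_p i : rowsum A (p i) = rowsum A i.
Proof.
rewrite /rowsum (reindex_inj (@perm_inj _ s)) /=; apply: eq_bigr => j _.
by rewrite hfix.
Qed.

Lemma cs_s j : colsum A (s j) = colsum A j.
Proof.
rewrite /colsum (reindex_inj (@perm_inj _ p)) /=; apply: eq_bigr => i _.
by rewrite hfix.
Qed.

Lemma cnt_eta v : count (pred1 v) [seq rowsum A i | i <- enum 'I_n] =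
  count (pred1 v) (eta_target n k).
Proof.
apply/seq.permP; rewrite -hA_eta /eta_p perm_sym.
by rewrite perm_sort.
Qed.

Lemma cnt_theta v : count (pred1 v) [seq colsum A i | i <- enum 'I_n] =
  count (pred1 v) (theta_target n k).
Proof.
apply/seq.permP; rewrite -hA_theta /theta_p perm_sym.
by rewrite perm_sort.
Qed.

Lemma eta_le v : v != 1 -> count (pred1 v) (eta_target n k) <= 1.
Proof.
move=> hv; rewrite count_cat count_nseq /= eq_sym (negPf hv) mul0n addn0.
rewrite count_uniq_mem; first by case: (_ \in _).
rewrite map_inj_in_uniq ?iota_uniq // => a b; rewrite !mem_iota !add0n => ha hb.
move=> e; rewrite -(subKn (ltnW (leq_trans ha hk))) e subKn //; exact: ltnW (leq_trans hb hk).
Qed.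

Lemma eta_ge : n - k <= count (pred1 1) (eta_target n k).
Proof. by rewrite count_cat count_nseq /= mul1n leq_addl. Qed.

Lemma theta_le v : v != k.+1 -> count (pred1 v) (theta_target n k) <= 1.
Proof.
move=> hv; rewrite count_cat count_nseq /= eq_sym (negPf hv) mul0n add0n.
rewrite count_uniq_mem; first by case: (_ \in _).
rewrite map_inj_in_uniq ?iota_uniq // => a b; rewrite !mem_iota !add0n => ha hb.
move=> e; rewrite -(subKn (ltnW ha)) e subKn //; exact: ltnW hb.
Qed.

Definition U := [set i | rowsum A i == 1].
Definition jf (i : 'I_n) : 'I_n := odflt i [pick j | A i j != 0%R].

Lemma jf_spec i : i \in U -> A i (jf i) != 0%R /\ forall j, A i j != 0%R -> j = jf i.
Proof.
rewrite inE /rowsum sum_bool_card => /eqP h1.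
rewrite /jf; case: pickP => [j hj | none]; last first.
  by move: h1; rewrite (eq_card0 none).
split => // j' hj'.
have : #|[pred j | A i j != 0%R]| <= 1 by rewrite h1.
by move/card_le1_eqP => /(_ j' j hj' hj).
Qed.

Lemma U_p u : u \in U -> p u \in U.
Proof. by rewrite !inE rs_p. Qed.

Lemma jf_p u : u \in U -> jf (p u) = s (jf u).
Proof.
move=> hu; have [h1 _] := jf_spec hu; have [_ h2] := jf_spec (U_p hu).
by apply/esym/h2; rewrite hfix.
Qed.

Lemma jf_inj : {in U &, injective jf}.
Proof.
move=> u u' hu hu' e; apply/eqP; apply/negPn/negP => ne.
have [a1 a2] := jf_spec hu; have [b1 b2] := jf_spec hu'.
have : (\det A = 0)%R.
  apply: (determinant_alternate ne) => x.
  case: (boolP (A u x != 0%R)) => hx.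
    have ex := a2 x hx.
    have hx' : A u' x != 0%R by rewrite ex e.
    by rewrite (F2_1 hx) (F2_1 hx').
  case: (boolP (A u' x != 0%R)) => hx'.
    by move: hx; rewrite (b2 x hx') -e a1.
  by move: hx hx'; rewrite !negbK => /eqP -> /eqP ->.
by move: hA_unit; rewrite unitmxE => /[swap] ->; rewrite unitr0.
Qed.

Definition V := jf @: U.

Lemma card_U : n - k <= #|U|.
Proof.
rewrite cardsE card_count.
by move: eta_ge; rewrite -cnt_eta count_map.
Qed.

Lemma colsum_notV c : c \notin V -> colsum A c <= k.
Proof.
move=> hc; rewrite /colsum sum_bool_card.
apply: (@leq_trans #|~: U|).
  apply: subset_leq_card; apply/subsetP => i; rewrite !inE => hi.
  apply/negP => hu; have hu' : i \in U by rewrite inE.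
  have [_ h2] := jf_spec hu'.
  by move: hc; rewrite (h2 _ hi) imset_f.
rewrite cardsCs card_ord setCK.
have := card_U; move: #|U| => m hm.
by rewrite leq_subLR addnC -leq_subLR.
Qed.

Lemma p_fix i : i \notin U -> p i = i.
Proof.
rewrite inE => hi; apply: (uniq_fixpt (f := rowsum A)); first exact: rs_p.
by rewrite cnt_eta eta_le.
Qed.

Lemma s_fix c : c \notin V -> s c = c.
Proof.
move=> hc; apply: (uniq_fixpt (f := colsum A)); first exact: cs_s.
rewrite cnt_theta theta_le //; have h := colsum_notV hc; by rewrite neq_ltn ltnS h.
Qed.

Lemma conj_exists : exists g : {perm 'I_n}, s = (p ^ g)%g.
Proof.
have cUV : #|~: U| = #|~: V|.
  rewrite [LHS]cardsCs [RHS]cardsCs !setCK card_in_imset //; exact: jf_inj.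
have [h [hY hinj]] := bij_sets cUV.
pose g x := if x \in U then jf x else h x.
have ginj : injective g.
  move=> x y; rewrite /g; case: (boolP (x \in U)) => hx; case: (boolP (y \in U)) => hy.
  - exact: jf_inj.
  - move=> e; have hyU : y \in ~: U by rewrite in_setC.
    by move: (hY y hyU); rewrite in_setC -e imset_f.
  - move=> e; have hxU : x \in ~: U by rewrite in_setC.
    by move: (hY x hxU); rewrite in_setC e imset_f.
  - by apply: hinj; rewrite in_setC.
have gp : forall x, g (p x) = s (g x).
  move=> x; rewrite /g; case: (boolP (x \in U)) => hx.
    by rewrite U_p // jf_p.
  have hxU : x \in ~: U by rewrite in_setC.
  rewrite p_fix // (negPf hx) s_fix //.
  by move: (hY x hxU); rewrite in_setC.
exists (perm ginj); apply/permP => x.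
have gE : forall y, g y = perm ginj y by move=> y; rewrite permE.
by rewrite !permM permE gp gE permKV.
Qed.

End Struct.
Local Open Scope ring_scope.

Section Alpha.
Variables n k : nat.
Local Notation perm := {perm 'I_n}.
Local Notation H := (Hnk n k).

Definition Fx (p s : perm) := [set A in H | act_mx p s A == A].

Lemma act_inj (a b : perm) : injective (act_mx a b).
Proof.
move=> A B h; have := congr1 (act_mx a^-1 b^-1) h.
by rewrite !act_mxM !mulgV !act_mx1.
Qed.

Lemma Fx_le (p s a b : perm) : (#|Fx p s| <= #|Fx (p ^ a) (s ^ b)|)%N.
Proof.
rewrite -(card_imset _ (@act_inj a b)); apply: subset_leq_card.
apply/subsetP => B /imsetP [A]; rewrite in_set => /andP [hA /eqP hf] ->.
rewrite in_set Hnk_act //= act_mxM /conjg !mulgA !mulgV !mul1g.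
by rewrite -act_mxM hf.
Qed.

Lemma Fx_conj (p s a b : perm) : #|Fx (p ^ a) (s ^ b)| = #|Fx p s|.
Proof.
apply/eqP; rewrite eqn_leq Fx_le andbT.
by rewrite -{2}(conjgK a p) -{2}(conjgK b s) Fx_le.
Qed.

Lemma alphaE (p s : perm) : alpha_char H p s = (#|Fx p s|)%:R.
Proof. by []. Qed.

Lemma alpha_nz (p s : perm) : alpha_char H p s != 0 -> (k <= n)%N ->
  exists g : perm, s = (p ^ g)%g.
Proof.
rewrite alphaE pnatr_eq0 -lt0n => /card_gt0P [A]; rewrite in_set => /andP [hA /eqP hf] hk.
apply: (@conj_exists n k A p s hk hA); exact/act_fixP.
Qed.

Lemma alpha_sym (p s : perm) : (k <= n)%N -> alpha_char H p s = alpha_char H s p.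
Proof.
move=> hk.
have key : forall x y : perm, alpha_char H x y != 0 -> alpha_char H x y = alpha_char H y x.
  move=> x y /alpha_nz /(_ hk) [g ->].
  by rewrite !alphaE -{1}(conjgK g x) Fx_conj.
case: (eqVneq (alpha_char H p s) 0) => h1; last exact: key.
case: (eqVneq (alpha_char H s p) 0) => h2; last by rewrite (key s p h2).
by rewrite h1 h2.
Qed.

Lemma alpha_sg (p s : perm) : (k <= n)%N -> alpha_char H p s != 0 -> sg p = sg s.
Proof. by move=> hk /alpha_nz /(_ hk) [g ->]; rewrite /sg odd_permJ. Qed.

End Alpha.

Theorem mainTheorem10 (n k : nat) (la mu : seq nat) :
  (k <= n)%N -> is_partn n la -> is_partn n mu ->
  mult la mu (Hnk n k) = mult (conj_part la) (conj_part mu) (Hnk n k) /\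
  mult la mu (Hnk n k) = mult mu la (Hnk n k).
Proof.
move=> hk hla hmu; split.
  rewrite /mult; congr (_ * _); apply: eq_bigr => p _; apply: eq_bigr => s _.
  rewrite !specht_conj // !rmorphM /= /sg !rmorph_sign -/(sg p) -/(sg s).
  case: (eqVneq (alpha_char (Hnk n k) p s) 0) => [->|h]; first by rewrite !mul0r.
  rewrite (alpha_sg hk h) mulrACA sg2 mul1r //.
rewrite /mult; congr (_ * _); rewrite [RHS]exchange_big /=.
apply: eq_bigr => p _; apply: eq_bigr => s _.
by rewrite (alpha_sym _ _ hk) [X in _ * X = _]mulrC.
Qed.
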